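(* Consider the perturbed system $\dot x = f(x)+\psi(x)$, where $f,\psi:\mathbb R^n\to\mathbb R^n$ are continuous, $f(0)=0$, solutions exist and are unique, and there exists $L>0$ such that $\|\psi(x)\|\leq L\|x\|$ for all $x\in\mathbb R^n$. Suppose the origin of the nominal system $\dot x = f(x)$ is fixed-time stable, and that there exists a continuously differentiable, positive definite, radially unbounded function $V:\mathbb R^n\to\mathbb R$ such that, along trajectories of the nominal system, $\dot V(x)\leq -aV(x)^p - bV(x)^q$ for all $x\neq 0$, with $a,b>0$, $0<p<1$, $q>1$. Assume further that there exist $k_1,k_2>0$ such that $V(x)\geq k_1\|x\|^2$ and $\left\|\frac{\partial V}{\partial x}(x)\right\|\leq k_2\|x\|$ for all $x\in\mathbb R^n$. Then the origin of the perturbed system $\dot x = f(x)+\psi(x)$ is fixed-time stable.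
   Context: $\|\cdot\|$ is the Euclidean norm. Fixed-time stability (FxTS) of the origin is understood as: there is a neighborhood $D$ of the origin (possibly all of $\mathbb R^n$) such that every trajectory starting in $D$ reaches the origin (and stays there) within a time $T$ bounded by a constant independent of the initial condition in $D$. *)

(* Defs.v *)
From mathcomp Require Import all_boot all_order all_algebra.
From mathcomp Require Import all_classical all_reals all_analysis.
Import Order.TTheory GRing.Theory Num.Theory numFieldNormedType.Exports.
Set Implicit Arguments. Unset Strict Implicit. Unset Printing Implicit Defensive.
Local Open Scope ring_scope.
Local Open Scope classical_set_scope.

Section Defs.
Context {R : realType} {n : nat}.

(* Euclidean norm on R^n (the library norm on matrices is the max norm). *)
Definition enorm (x : 'rV[R]_n) : R := Num.sqrt (\sum_(i < n) x ord0 i ^+ 2).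

Definition grad (V : 'rV[R]_n -> R) (x : 'rV[R]_n) : 'rV[R]_n :=
  \row_(i < n) derive V x (delta_mx ord0 i).

Definition C1 (V : 'rV[R]_n -> R) : Prop :=
  (forall x, differentiable V x) /\ continuous (grad V).

Definition pos_def (V : 'rV[R]_n -> R) : Prop :=
  V 0 = 0 /\ forall x, x != 0 -> 0 < V x.

Definition radially_unbounded (V : 'rV[R]_n -> R) : Prop :=
  forall M : R, exists r : R, forall x, r < enorm x -> M < V x.

Definition is_solution (F : 'rV[R]_n -> 'rV[R]_n) (x0 : 'rV[R]_n)
    (x : R -> 'rV[R]_n) : Prop :=
  x 0 = x0 /\ (x t @[t --> (0 : R)^'+] --> x0) /\
  forall t : R, 0 < t -> is_derive t (1 : R) x (F (x t)).

Definition well_posed (F : 'rV[R]_n -> 'rV[R]_n) : Prop :=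
  forall x0, (exists x, is_solution F x0 x) /\
    (forall x y, is_solution F x0 x -> is_solution F x0 y ->
       forall t, 0 <= t -> x t = y t).

Definition FxTS (F : 'rV[R]_n -> 'rV[R]_n) : Prop :=
  exists D : set 'rV[R]_n, nbhs (0 : 'rV[R]_n) D /\
  exists T : R, forall x0, D x0 -> forall x, is_solution F x0 x ->
    exists t, 0 <= t <= T /\ forall s, t <= s -> x s = 0.

End Defs.

(* Main.v *)
Require Import Defs.
From mathcomp Require Import all_boot all_order all_algebra.
From mathcomp Require Import all_classical all_reals all_analysis.
From mathcomp Require Import ring lra.
Import Order.TTheory GRing.Theory Num.Theory numFieldNormedType.Exports.
Local Open Scope ring_scope.
Local Open Scope classical_set_scope.

Section Gen.
Variable R : realType.

Lemma chain_der (U : normedModType R) (f : R -> U) (g : U -> R) (t : R) (df : U) :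
  is_derive t 1 f df -> differentiable g (f t) ->
  is_derive t 1 (g \o f) ('d g (f t) df).
Proof.
move=> [Hd Hv] Hg.
have Hf : differentiable f t by apply/derivable1_diffP.
have Hgf : differentiable (g \o f) t by exact: differentiable_comp.
apply: DeriveDef; first exact/derivable1_diffP.
rewrite deriveE // diff_comp //=. by rewrite -(deriveE _ Hf) Hv.

Qed.

Lemma der_cont (f : R -> R) t df : is_derive t (1:R) f df -> {for t, continuous f}.
Proof.
move=> [Hd _]; apply: differentiable_continuous; exact/derivable1_diffP.
Qed.

Lemma contA (W d : R -> R) (t0 b : R) : t0 < b ->
  (forall t, t0 < t <= b -> is_derive t 1 W (d t)) ->
  W t @[t --> t0^'+] --> W t0 -> {within `[t0, b], continuous W}.
Proof.
move=> tb Hd Hr; apply/continuous_within_itvP => //; split => //.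
- move=> t; rewrite in_itv /= => /andP[h1 h2].
  apply: der_cont (Hd t _); by rewrite h1 ltW.
- apply: cvg_at_left_filter; apply: der_cont (Hd b _); by rewrite tb lexx.
Qed.


Lemma noninc (W d : R -> R) (t0 r0 s : R) :
  W t0 < r0 -> (forall t, t0 < t -> is_derive t 1 W (d t)) ->
  W t @[t --> t0^'+] --> W t0 ->
  (forall t, t0 < t -> W t < r0 -> d t <= 0) ->
  t0 <= s -> W s <= W t0.
Proof.
move=> Hr0 Hd Hr Hneg ts.
rewrite leNgt; apply/negP => Hs.
set m := W t0 in Hr0 Hs Hr *.
set l := Num.min (W s) ((m + r0)/2).
have ml : m < l by rewrite lt_min Hs /=; lra.
have lr : l < r0.
  apply: (le_lt_trans (y := (m + r0)/2)); first by rewrite ge_min lexx orbT.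
  lra.
set S := [set t | t0 <= t <= s /\ l <= W t].
have sS : S s by split; [rewrite ts lexx| rewrite ge_min lexx].
have lbS : lbound S t0 by move=> t [/andP[]].
have hS : has_inf S by split; [exists s | exists t0].
set v := inf S.
have v_lb : forall t, S t -> v <= t := ge_inf (proj2 hS).
have t0v : t0 <= v := lb_le_inf (ex_intro _ s sS) lbS.
have vs : v <= s := v_lb s sS.
have Wv : l <= W v.
  rewrite leNgt; apply/negP => Wvl.
  have Hrv : W t @[t --> v^'+] --> W v.
    have [<-//|vt0] := eqVneq t0 v.
    apply: cvg_at_right_filter; apply: der_cont (Hd v _).
    by rewrite lt_neqAle vt0 t0v.
  have H : \forall t \near v^'+, W t < l := cvgr_lt (W v) Hrv l Wvl.
  have Fv : Filter v^'+ by exact: at_right_proper_filter.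
  have [δ /= δ0 Hδ] := (nbhs_ballP v _).1 (H Fv).
  have [e Se ev] := inf_adherent δ0 hS.
  have ve : v <= e := v_lb e Se.
  have [vee|vne] := eqVneq v e.
    by move: Wvl; rewrite vee ltNge; case: Se => _ ->.
  have : W e < l.
    apply: Hδ; last by rewrite lt_neqAle vne ve.
    rewrite /ball /= distrC ger0_norm ?subr_ge0 //; rewrite -/v in ev; lra.
  by rewrite ltNge; case: Se => _ ->.
have t0v' : t0 < v.
  rewrite lt_neqAle t0v andbT; apply/eqP => e; move: Wv; rewrite -e -/m; lra.
have [c cin Heq] : exists2 c, c \in `]t0, v[%R & W v - W t0 = d c * (v - t0).
  apply: MVT => //.
    move=> x; rewrite in_itv /= => /andP[h1 _]; exact: Hd.
  apply: contA => //.
    move=> t /andP[h1 _]; exact: Hd.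
move: cin; rewrite in_itv /= => /andP[c1 c2].
have Wc : W c < l.
  rewrite ltNge; apply/negP => lc.
  have : v <= c by apply: v_lb; split => //; rewrite (ltW c1) /= (le_trans (ltW c2) vs).
  by rewrite leNgt c2.
have dc := Hneg c c1 (lt_trans Wc lr).
rewrite -/m in Heq.
have : d c * (v - t0) <= 0 by apply: mulr_le0_ge0 => //; lra.
lra.
Qed.

Lemma chain1 (f g : R -> R) (t df dg : R) : is_derive t 1 f df ->
  is_derive (f t) 1 g dg -> is_derive t 1 (g \o f) (dg * df).
Proof.
move=> H1 H2.
have Dg : differentiable g (f t).
  by case: H2 => H _; apply/derivable1_diffP.
have := @chain_der R^o f g t df H1 Dg.
have -> : 'd g (f t) df = dg * df.
  rewrite -[in LHS](mulr1 df) -[df * 1]/(df *: (1:R)) linearZ /= -deriveE //.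
  by case: H2 => _ ->; rewrite mulrC.
done.
Qed.

Lemma lin_der (k t : R) : is_derive t 1 (fun s : R => k * s) k.
Proof.
have := is_deriveZ k (is_derive_id t (1:R)).
by rewrite /GRing.scale /= mulr1.
Qed.


Lemma reach (W d : R -> R) (e κ r0 : R) : 0 < e -> 0 < κ ->
  (forall t : R, 0 < t -> is_derive t 1 W (d t)) ->
  W t @[t --> 0^'+] --> W 0 ->
  (forall t, 0 < t -> 0 < W t -> e * W t `^ (e - 1) * d t <= - κ) ->
  (forall t, 0 <= t -> W t <= r0) ->
  exists t, 0 <= t <= r0 `^ e / κ /\ W t <= 0.
Proof.
move=> e0 k0 Hd Hr Hk Hb.
set T := r0 `^ e / κ.
have T0 : 0 <= T by rewrite divr_ge0 ?powR_ge0 // ltW.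
have [W0|W0] := leP (W 0) 0; first by exists 0; rewrite lexx T0.
apply: contrapT => Hno.
have Hpos : forall t, 0 <= t <= T -> 0 < W t.
  by move=> t Ht; rewrite ltNge; apply/negP => h; apply: Hno; exists t.
have r00 : 0 < r0 := lt_le_trans W0 (Hb 0 (lexx _)).
have T0' : 0 < T by rewrite divr_gt0 ?powR_gt0.
pose G := ((fun w : R => w `^ e) \o W) + (fun s : R => κ * s).
have GD : forall t, 0 < t <= T ->
    is_derive t 1 G (e * W t `^ (e - 1) * d t + κ).
  move=> t /andP[t1 t2].
  apply: is_deriveD; last exact: lin_der.
  apply: chain1; first exact: Hd.
  apply: is_derive1_powR; apply: Hpos; rewrite ltW //.
have Gr : G t @[t --> 0^'+] --> G 0.
  apply: cvgD.
    apply: (cvg_comp _ _ Hr).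
    have hc := der_cont _ _ _ (is_derive1_powR e W0); exact hc.
  apply: cvg_at_right_filter; apply: der_cont; exact: lin_der.
have [c cin Heq] : exists2 c, c \in `]0, T[%R & G T - G 0 = (e * W c `^ (e - 1) * d c + κ) * (T - 0).
  apply: MVT => //.
    move=> x; rewrite in_itv /= => /andP[h1 h2]; apply: (GD); by rewrite h1 (ltW h2).
  exact: (contA _ _ _ _ T0' GD Gr).
move: cin; rewrite in_itv /= => /andP[c1 c2].
have hc := Hk c c1 (Hpos c _).
have : (e * W c `^ (e - 1) * d c + κ) * (T - 0) <= 0.
  by apply: mulr_le0_ge0; [rewrite (ltW c1) (ltW c2) in hc; lra | lra].
rewrite -Heq; change (W T `^ e + κ * T - (W 0 `^ e + κ * 0) <= 0 -> False); rewrite mulr0 addr0.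
have WT := powR_gt0 e (Hpos T _).
have W0r : W 0 `^ e <= r0 `^ e.
  by apply: ge0_ler_powR; rewrite ?nnegrE ?(ltW e0) ?(ltW W0) ?(ltW r00) ?(Hb 0 (lexx 0)).
have : κ * T = r0 `^ e by rewrite /T mulrC divfK // gt_eqF.
rewrite lexx T0 in WT.
have := WT isT; lra.
Qed.


Lemma enorm_sq n (u : 'rV[R]_n) : enorm u ^+ 2 = \sum_(i < n) u ord0 i ^+ 2.
Proof. by rewrite /enorm sqr_sqrtr // sumr_ge0 // => i _; rewrite sqr_ge0. Qed.

Lemma enorm_ge0 n (u : 'rV[R]_n) : 0 <= enorm u.
Proof. exact: sqrtr_ge0. Qed.

Lemma enorm0 n : enorm (0 : 'rV[R]_n) = 0.
Proof. by rewrite /enorm big1 ?sqrtr0 // => i _; rewrite mxE expr0n. Qed.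

Lemma dV_bound n (V : 'rV[R]_n -> R) (x v : 'rV[R]_n) : differentiable V x ->
  'd V x v <= (enorm (grad V x) ^+ 2 + enorm v ^+ 2) / 2.
Proof.
move=> Dx.
have -> : 'd V x v = \sum_(i < n) v ord0 i * grad V x ord0 i.
  rewrite {1}(row_sum_delta v) linear_sum; apply: eq_bigr => i _.
  by rewrite linearZ /= mxE deriveE.
rewrite !enorm_sq -big_split /= mulr_suml; apply: ler_sum => i _.
have := sqr_ge0 (grad V x ord0 i - v ord0 i); lra.
Qed.

End Gen.
Theorem corollary1 (R : realType) (n : nat)
  (f psi : 'rV[R]_n -> 'rV[R]_n) (V : 'rV[R]_n -> R)
  (L a b p q k1 k2 : R) :
  continuous f -> continuous psi -> f 0 = 0 ->
  well_posed (fun x => f x + psi x) ->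
  0 < L -> (forall x, enorm (psi x) <= L * enorm x) ->
  FxTS f ->
  C1 V -> pos_def V -> radially_unbounded V ->
  0 < a -> 0 < b -> 0 < p -> p < 1 -> 1 < q ->
  (forall x, x != 0 -> 'd V x (f x) <= - a * V x `^ p - b * V x `^ q) ->
  0 < k1 -> 0 < k2 ->
  (forall x, k1 * enorm x ^+ 2 <= V x) ->
  (forall x, enorm (grad V x) <= k2 * enorm x) ->
  FxTS (fun x => f x + psi x).
Proof.
move=> cf cpsi f0 _ L0 Hpsi _ [DV _] [V0 Vpos] _ a0 b0 p0 p1 q1 Hnom k10 k20 Hk1 Hk2.
pose C := (k2 ^+ 2 + L ^+ 2) / 2.
pose c := C / k1.
have C0 : 0 < C by rewrite divr_gt0 // addr_gt0 // exprn_gt0.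
have c0 : 0 < c by rewrite divr_gt0.
have Vge0 : forall y, 0 <= V y.
  move=> y; apply: le_trans (Hk1 y); apply: mulr_ge0; [exact: ltW | exact: sqr_ge0].
have Hpsi_b : forall y, 'd V y (psi y) <= c * V y.
  move=> y; apply: le_trans (@dV_bound R n V y (psi y) (DV y)) _.
  have g0 := @enorm_ge0 R n (grad V y); have g1 := Hk2 y.
  have s0 := @enorm_ge0 R n (psi y); have s1 := Hpsi y.
  have ny0 := @enorm_ge0 R n y; have hy := Hk1 y.
  have e1 : enorm (grad V y) ^+ 2 <= k2 ^+ 2 * enorm y ^+ 2.
    by rewrite -exprMn !expr2; apply: ler_pM.
  have e2 : enorm (psi y) ^+ 2 <= L ^+ 2 * enorm y ^+ 2.
    by rewrite -exprMn !expr2; apply: ler_pM.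
  have e3 : C * enorm y ^+ 2 <= c * V y.
    apply: (le_trans (y := c * (k1 * enorm y ^+ 2))).
      by rewrite /c mulrA divfK ?gt_eqF.
    by apply: ler_wpM2l; [exact: ltW | exact: hy].
  apply: le_trans e3; rewrite /C; lra.
pose r0 := (a / (2 * c)) `^ (1 - p)^-1.
have r0e : r0 `^ (1 - p) = a / (2 * c).
  rewrite /r0 -powRrM mulVf ?powRr1 //; last by rewrite subr_eq0 gt_eqF.
  by rewrite ltW // divr_gt0 // mulr_gt0.
have r00 : 0 < r0 by rewrite powR_gt0 // divr_gt0 // mulr_gt0.
have cw : forall w, 0 < w -> w <= r0 -> c * w <= a / 2 * w `^ p.
  move=> w w0 wr.
  have wpe : w = w `^ p * w `^ (1 - p).
    rewrite -powRD; last by apply/implyP => _; rewrite gt_eqF.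
    by rewrite addrC subrK powRr1 // ltW.
  have h1 : w `^ (1 - p) <= a / (2 * c).
    rewrite -r0e; apply: ge0_ler_powR => //.
    - by rewrite subr_ge0 ltW.
    - by rewrite nnegrE ltW.
    - by rewrite nnegrE ltW.
  have h2 : c * (a / (2 * c)) = a / 2.
    by field; rewrite gt_eqF.
  have h3 := powR_ge0 w p.
  rewrite {1}wpe mulrCA mulrC; apply: ler_pM => //.
  - by rewrite mulr_ge0 ?powR_ge0 // ltW.
  - by rewrite -h2 ler_pM2l.
pose dVF y := 'd V y (f y + psi y).
have key1 : forall y, 0 < V y -> V y <= r0 -> dVF y <= - (a / 2) * V y `^ p.
  move=> y Vy Vr.
  have y0 : y != 0 by apply/eqP => e; move: Vy; rewrite e V0 ltxx.
  rewrite /dVF linearD /=.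
  have h1 := Hnom y y0. have h2 := Hpsi_b y. have h3 := cw _ Vy Vr.
  have h4 : 0 <= b * V y `^ q by apply: mulr_ge0; [exact: ltW | exact: powR_ge0].
  lra.
have key0 : forall y, V y <= r0 -> dVF y <= 0.
  move=> y Vr; have [Vy|] := ltP 0 (V y).
    apply: le_trans (key1 y Vy Vr) _.
    rewrite mulNr oppr_le0; apply: mulr_ge0; last exact: powR_ge0.
    by apply: divr_ge0 => //; exact: ltW.
  move=> Vy.
  have y0 : y = 0.
    apply/eqP; apply: contraLR Vy => /Vpos; rewrite -ltNge; done.
  rewrite /dVF y0 f0 add0r.
  have := Hpsi_b 0; rewrite V0 mulr0 => h; exact: h.
pose κ := (1 - p) * a / 2.
have k0 : 0 < κ by rewrite /κ divr_gt0 // mulr_gt0 // subr_gt0.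
exists [set y | V y < r0]; split.
  have cV : {for 0, continuous V} := differentiable_continuous (DV 0).
  have : \forall y \near (0 : 'rV[R]_n), V y < r0.
    have r0' : V 0 < r0 by rewrite V0.
    exact: (@cvgr_lt R _ _ (nbhs_filter _) V (V 0) cV r0 r0').
  done.
exists (r0 `^ (1 - p) / κ) => x0 /= Hx0 xs [xs0 [xlim xder]].
pose W t := V (xs t).
pose d t := dVF (xs t).
have Hd : forall t : R, 0 < t -> is_derive t 1 W (d t).
  move=> t t0; exact: (@chain_der R _ xs V t _ (xder t t0) (DV (xs t))).
have Hr : W t @[t --> 0^'+] --> W 0.
  rewrite /W xs0; apply: (cvg_comp _ _ xlim).
  exact: (differentiable_continuous (DV x0)).
have W0r : W 0 < r0 by rewrite /W xs0.
have Hneg : forall t0 : R, 0 <= t0 -> forall t, t0 < t -> W t < r0 -> d t <= 0.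
  move=> t0 _ t _ Wt; apply: key0; exact: ltW.
have inv : forall s, 0 <= s -> W s <= W 0.
  move=> s s0; exact: (noninc _ _ _ _ _ _ W0r Hd Hr (Hneg 0 (lexx 0)) s0).
have Hb : forall t, 0 <= t -> W t <= r0.
  move=> t t0; exact: le_trans (inv t t0) (ltW W0r).
have Hk : forall t, 0 < t -> 0 < W t -> (1 - p) * W t `^ (1 - p - 1) * d t <= - κ.
  move=> t t0 Wt.
  have h := key1 (xs t) Wt (Hb t (ltW t0)).
  rewrite (_ : 1 - p - 1 = - p); last by rewrite addrAC subrr add0r.
  rewrite powRN.
  have P0 : 0 < W t `^ p by rewrite powR_gt0.
  have e0 : 0 <= (1 - p) * (W t `^ p)^-1.
    apply: mulr_ge0; first by rewrite subr_ge0 ltW.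
    by rewrite invr_ge0 ltW.
  apply: (le_trans (ler_wpM2l e0 h)).
  rewrite mulNr mulrN -mulrA [(W t `^ p)^-1 * _]mulrCA mulVf ?gt_eqF // mulr1.
  by rewrite /κ mulrA.
have p1' : 0 < 1 - p by rewrite subr_gt0.
have [t [/andP[t0 tT] Wt]] := reach R W d (1 - p) κ r0 p1' k0 Hd Hr Hk Hb.
exists t; split; first by rewrite t0 tT.
move=> s ts.
have Wtr : W t < r0 by apply: le_lt_trans Wt r00.
have Hrt : W u @[u --> t^'+] --> W t.
  have [<-//|tn0] := eqVneq 0 t.
  apply: cvg_at_right_filter; apply: der_cont (Hd t _).
  by rewrite lt_neqAle tn0 t0.
have Hdt : forall u : R, t < u -> is_derive u 1 W (d u).
  move=> u tu; apply: Hd; exact: le_lt_trans t0 tu.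
have := noninc _ _ _ _ _ _ Wtr Hdt Hrt (Hneg t t0) ts.
move=> Ws; apply/eqP; apply: contraLR (le_trans Ws Wt) => /Vpos.
by rewrite -ltNge.
Qed.
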